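(* Let $S$ and $S'$ be finite sets of pairwise disjoint axis-aligned rectangles in $\mathbb{R}^2$, and let $\mathcal{M}$ be a finite set of point-normal markers such that both $S$ and $S'$ are fully consistent with $\mathcal{M}$ (i.e. $\mathcal{M}$ is a marker-per-edge markup of both). Then $S=S'$.
   Context: An axis-aligned rectangle is a set $[a,b]\times[c,d]\subset\mathbb{R}^2$ with $a<b$, $c<d$. A (point-normal) marker is a pair $(p,n)$ with $p\in\mathbb{R}^2$ and $n\in\{(-1,0),(1,0),(0,1),(0,-1)\}$. A marker $(p,n)$ is on and aligned with an edge $e$ of a rectangle $Q$ if $p\in e$ and $n$ is the outward unit normal of $Q$ along $e$. A set of rectangles is consistent with a set of markers if every marker is on and aligned with an edge of one of the rectangles; it is fully consistent if moreover every edge of every rectangle in the set has at least one marker on and aligned with it. *)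

(* Defs.v *)
From Stdlib Require Import Reals List.
Open Scope R_scope.

(* A closed axis-aligned rectangle [ra,rb] x [rc,rd]; validity a<b, c<d is
   the predicate [is_rect]. *)
Record rect := mkRect { ra : R; rb : R; rc : R; rd : R }.

Definition is_rect (Q : rect) : Prop := ra Q < rb Q /\ rc Q < rd Q.

Definition point := (R * R)%type.

Definition in_rect (p : point) (Q : rect) : Prop :=
  ra Q <= fst p <= rb Q /\ rc Q <= snd p <= rd Q.

Definition rects_disjoint (Q1 Q2 : rect) : Prop :=
  forall p : point, ~ (in_rect p Q1 /\ in_rect p Q2).

Definition pairwise_disjoint (S : list rect) : Prop :=
  forall Q1 Q2, In Q1 S -> In Q2 S -> Q1 <> Q2 -> rects_disjoint Q1 Q2.

Inductive side := Left | Right | Top | Bottom.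

Definition on_edge (p : point) (Q : rect) (s : side) : Prop :=
  match s with
  | Left   => fst p = ra Q /\ rc Q <= snd p <= rd Q
  | Right  => fst p = rb Q /\ rc Q <= snd p <= rd Q
  | Top    => snd p = rd Q /\ ra Q <= fst p <= rb Q
  | Bottom => snd p = rc Q /\ ra Q <= fst p <= rb Q
  end.

Definition outward_normal (s : side) : point :=
  match s with
  | Left => (-1, 0) | Right => (1, 0) | Top => (0, 1) | Bottom => (0, -1)
  end.

Definition marker := (point * point)%type.

Definition is_marker (m : marker) : Prop :=
  snd m = (-1, 0) \/ snd m = (1, 0) \/ snd m = (0, 1) \/ snd m = (0, -1).

Definition on_and_aligned (m : marker) (Q : rect) (s : side) : Prop :=
  on_edge (fst m) Q s /\ snd m = outward_normal s.

Definition consistent (S : list rect) (M : list marker) : Prop :=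
  forall m, In m M -> exists Q s, In Q S /\ on_and_aligned m Q s.

Definition fully_consistent (S : list rect) (M : list marker) : Prop :=
  consistent S M /\
  forall Q s, In Q S -> exists m, In m M /\ on_and_aligned m Q s.

(* Main.v *)
Require Import Defs.
From Stdlib Require Import Reals List Lra Classical.
Open Scope R_scope.

Ltac dd := repeat match goal with H : _ /\ _ |- _ => destruct H end.
Ltac ir := unfold in_rect; simpl; repeat split; lra.

Lemma norm_inj s s' : outward_normal s = outward_normal s' -> s = s'.
Proof. destruct s, s'; simpl; intro H; try reflexivity; injection H; intros; lra. Qed.

Lemma edge_match F G M : fully_consistent F M -> consistent G M ->
  forall Q s, In Q F -> exists p R, In R G /\ on_edge p Q s /\ on_edge p R s.
Proof.
  intros [_ HF] HG Q s HQ. destruct (HF Q s HQ) as [m [Hm [He Hn]]].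
  destruct (HG m Hm) as [R [s' [HR [He' Hn']]]]. rewrite Hn in Hn'.
  apply norm_inj in Hn'. subst s'. exists (fst m), R. auto.
Qed.

Lemma same G R1 R2 p : pairwise_disjoint G -> In R1 G -> In R2 G ->
  in_rect p R1 -> in_rect p R2 -> R1 = R2.
Proof.
  intros H H1 H2 I1 I2. destruct (classic (R1 = R2)) as [e|e]; auto.
  exfalso. apply (H R1 R2 H1 H2 e p). auto.
Qed.

Definition good (F G : list rect) : Prop :=
 (forall Q, In Q F -> is_rect Q) /\ (forall Q, In Q G -> is_rect Q) /\
 pairwise_disjoint F /\ pairwise_disjoint G /\
 (forall Q s, In Q F -> exists p R, In R G /\ on_edge p Q s /\ on_edge p R s) /\
 (forall Q s, In Q G -> exists p R, In R F /\ on_edge p Q s /\ on_edge p R s).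

Lemma good_sym F G : good F G -> good G F.
Proof. unfold good; tauto. Qed.

Definition Dset (F G : list rect) (R : rect) := (In R F /\ ~ In R G) \/ (In R G /\ ~ In R F).

Definition lex (m y : rect) := rc m < rc y \/ (rc m = rc y /\ ra m <= ra y).

Lemma cross_lt F G A B : good F G -> In A F -> ~ In A G -> In B G -> ~ In B F ->
  ra A = ra B -> rc A = rc B -> rb A < rb B ->
  (forall R, Dset F G R -> rc A <= rc R) -> False.
Proof.
  intros [HrF [HrG [HdF [HdG [HFG HGF]]]]] HA nA HB nB e1 e2 lt Hmin.
  pose proof (HrF A HA) as rA. pose proof (HrG B HB) as rB. unfold is_rect in rA, rB.
  destruct (HFG A Right HA) as [p1 [R1 [HR1 [E1 E1']]]]. unfold on_edge in E1, E1'.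
  pose proof (HrG R1 HR1) as r1. unfold is_rect in r1. dd.
  assert (h1: rd B < snd p1).
  { destruct (Rlt_le_dec (rd B) (snd p1)) as [h|h]; auto. exfalso.
    assert (R1 = B) by (apply (same G R1 B p1); auto; ir). subst R1. lra. }
  destruct (HGF B Top HB) as [p2 [V [HV [E2 E2']]]]. unfold on_edge in E2, E2'.
  pose proof (HrF V HV) as rV; unfold is_rect in rV; dd.
  assert (h2: rb A < fst p2).
  { destruct (Rlt_le_dec (rb A) (fst p2)); auto. exfalso.
    assert (V = A) by (apply (same F V A p2); auto; ir). subst V; lra. }
  assert (nV: ~ In V G).
  { intro HVG. assert (V = B) by (apply (same G V B p2); auto; ir). subst V. contradiction. }
  pose proof (Hmin V (or_introl (conj HV nV))) as mV.
  assert (h3: rb A < ra V).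
  { destruct (Rlt_le_dec (rb A) (ra V)); auto. exfalso.
    assert (V = A) by (apply (same F V A (rb A, rd B)); auto; ir). subst V; lra. }
  destruct (HFG V Left HV) as [p3 [R3 [HR3 [E3 E3']]]]. unfold on_edge in E3, E3'.
  pose proof (HrG R3 HR3) as r3; unfold is_rect in r3. dd.
  assert (R3 = B) by (apply (same G R3 B p3); auto; ir). subst R3. lra.
Qed.

Lemma cross F G A B : good F G -> In A F -> ~ In A G -> In B G -> ~ In B F ->
  ra A = ra B -> rc A = rc B ->
  (forall R, Dset F G R -> rc A <= rc R) -> False.
Proof.
  intros Hg HA nA HB nB e1 e2 Hmin.
  destruct (Rtotal_order (rb A) (rb B)) as [h|[h|h]].
  - eapply cross_lt; eauto.
  - destruct Hg as [HrF [HrG [HdF [HdG [HFG HGF]]]]].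
    pose proof (HrF A HA) as rA. pose proof (HrG B HB) as rB. unfold is_rect in rA, rB. dd.
    destruct (Rtotal_order (rd A) (rd B)) as [g|[g|g]].
    + destruct (HFG A Top HA) as [p [R [HR [E E']]]]. unfold on_edge in E, E'.
      pose proof (HrG R HR) as r; unfold is_rect in r; dd.
      assert (R = B) by (apply (same G R B p); auto; ir). subst R. lra.
    + apply nB. destruct A as [a1 a2 a3 a4], B as [b1 b2 b3 b4]; simpl in *.
      subst. exact HA.
    + destruct (HGF B Top HB) as [p [R [HR [E E']]]]. unfold on_edge in E, E'.
      pose proof (HrF R HR) as r; unfold is_rect in r; dd.
      assert (R = A) by (apply (same F R A p); auto; ir). subst R. lra.
  - apply (cross_lt G F B A); auto using good_sym.
    intros R HR. rewrite <- e2. apply Hmin. unfold Dset in *; tauto.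
Qed.

Lemma core F G Q : good F G -> In Q F -> ~ In Q G ->
  (forall R, Dset F G R -> lex Q R) -> False.
Proof.
  intros Hg HQ nQ Hmin.
  assert (Hmin' : forall R, Dset F G R -> rc Q <= rc R).
  { intros R HR. destruct (Hmin R HR) as [h|[h h']]; lra. }
  pose proof Hg as [HrF [HrG [HdF [HdG [HFG HGF]]]]].
  pose proof (HrF Q HQ) as rQ. unfold is_rect in rQ.
  destruct (HFG Q Bottom HQ) as [p0 [Q' [HQ' [E0 E0']]]]. unfold on_edge in E0, E0'.
  pose proof (HrG Q' HQ') as rQ'. unfold is_rect in rQ'. dd.
  assert (nQ' : ~ In Q' F).
  { intro HX. assert (Q' = Q) by (apply (same F Q' Q p0); auto; ir). subst Q'. contradiction. }
  assert (l1 : ra Q <= ra Q').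
  { destruct (Hmin Q' (or_intror (conj HQ' nQ'))) as [h|[h h']]; lra. }
  destruct (Rle_lt_or_eq_dec _ _ l1) as [l2|l2].
  2: { apply (cross F G Q Q'); auto; lra. }
  destruct (HGF Q' Left HQ') as [p1 [R1 [HR1 [E1 E1']]]]. unfold on_edge in E1, E1'.
  pose proof (HrF R1 HR1) as r1. unfold is_rect in r1. dd.
  assert (h1 : rd Q < snd p1).
  { destruct (Rlt_le_dec (rd Q) (snd p1)); auto. exfalso.
    assert (R1 = Q) by (apply (same F R1 Q p1); auto; ir). subst R1. lra. }
  destruct (HFG Q Left HQ) as [p2 [R' [HR' [E2 E2']]]]. unfold on_edge in E2, E2'.
  pose proof (HrG R' HR') as r'. unfold is_rect in r'. dd.
  assert (nR' : ~ In R' F).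
  { intro HX. assert (R' = Q) by (apply (same F R' Q p2); auto; ir). subst R'. contradiction. }
  destruct (Hmin R' (or_intror (conj HR' nR'))) as [h|[h h']].
  2: { apply (cross F G Q R'); auto; lra. }
  destruct (HGF R' Bottom HR') as [p3 [R3 [HR3 [E3 E3']]]]. unfold on_edge in E3, E3'.
  pose proof (HrF R3 HR3) as r3. unfold is_rect in r3. dd.
  assert (h3 : rb Q < rb R').
  { destruct (Rlt_le_dec (rb Q) (rb R')); auto. exfalso.
    assert (R3 = Q) by (apply (same F R3 Q p3); auto; ir). subst R3. lra. }
  assert (R' = Q') by (apply (same G R' Q' (fst p0, snd p2)); auto; ir).
  subst R'. lra.
Qed.

Lemma lex_total a b : lex a b \/ lex b a.
Proof.
  unfold lex. destruct (Rtotal_order (rc a) (rc b)) as [h|[h|h]].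
  - left; left; auto.
  - destruct (Rle_dec (ra a) (ra b)); [left; right; auto | right; right; split; lra].
  - right; left; lra.
Qed.

Lemma lex_trans a b c : lex a b -> lex b c -> lex a c.
Proof.
  unfold lex; intros [h|[h1 h2]] [g|[g1 g2]];
  [left; lra | left; lra | left; lra | right; split; lra].
Qed.

Lemma lex_refl a : lex a a.
Proof. right; split; lra. Qed.

Lemma lexmin (P : rect -> Prop) (L : list rect) :
  (exists x, In x L /\ P x) ->
  exists m, In m L /\ P m /\ forall y, In y L -> P y -> lex m y.
Proof.
  induction L as [|x l IH]; intros H.
  - destruct H as [x [[] _]].
  - destruct (classic (exists y, In y l /\ P y)) as [Hl|Hl].
    + destruct (IH Hl) as [m [Hm [Pm Hmin]]].
      destruct (classic (P x)) as [Px|Px].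
      * destruct (lex_total x m) as [Hxm|Hmx].
        -- exists x. split; [left; auto|split; auto].
           intros y [<-|Hy] Py; [apply lex_refl|]. eapply lex_trans; eauto.
        -- exists m. split; [right; auto|split; auto].
           intros y [<-|Hy] Py; auto.
      * exists m. split; [right; auto|split; auto].
        intros y [<-|Hy] Py; [contradiction|auto].
    + destruct H as [y [[->|Hy] Py]].
      * exists y. split; [left; auto|split; auto].
        intros z [<-|Hz] Pz; [apply lex_refl|]. exfalso; apply Hl; eauto.
      * exfalso; apply Hl; eauto.
Qed.

Theorem mainTheorem14 (S S' : list rect) (M : list marker) :
  (forall Q, In Q S -> is_rect Q) ->
  (forall Q, In Q S' -> is_rect Q) ->
  pairwise_disjoint S -> pairwise_disjoint S' ->
  (forall m, In m M -> is_marker m) ->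
  fully_consistent S M -> fully_consistent S' M ->
  forall Q, In Q S <-> In Q S'.
Proof.
  intros HrS HrS' HdS HdS' _ HfS HfS'.
  assert (Hg : good S S').
  { unfold good. refine (conj HrS (conj HrS' (conj HdS (conj HdS' (conj _ _))))).
    - apply (edge_match S S' M); auto. apply HfS'.
    - apply (edge_match S' S M); auto. apply HfS. }
  assert (H : forall R, ~ Dset S S' R).
  { intros R HR.
    destruct (lexmin (Dset S S') (S ++ S')) as [m [Hm [Pm Hmin]]].
    { exists R; split; auto. apply in_or_app. unfold Dset in HR; tauto. }
    assert (Hmin' : forall y, Dset S S' y -> lex m y).
    { intros y Hy. apply Hmin; auto. apply in_or_app. unfold Dset in Hy; tauto. }
    destruct Pm as [[mS nS']|[mS' nS]].
    - apply (core S S' m); auto.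
    - apply (core S' S m); auto using good_sym.
      intros y Hy. apply Hmin'. unfold Dset in *; tauto. }
  intro Q; split; intro HQ.
  - destruct (classic (In Q S')) as [h|h]; auto. exfalso. apply (H Q). unfold Dset; tauto.
  - destruct (classic (In Q S)) as [h|h]; auto. exfalso. apply (H Q). unfold Dset; tauto.
Qed.
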